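(* Let $X\in\mathrm{St}(n,k)$ be fixed, $\widehat\beta\colon I\to\mathrm{St}(n,k)$ a curve and $\widehat Z$ a normal vector field along $\widehat\beta$ (i.e. $\widehat Z(t)\in N_{\widehat\beta(t)}\mathrm{St}(n,k)$). Let $q=(R,\theta)\colon I\to O(n)\times O(k)$ be a horizontal lift of $\widehat\beta$. Then $\widehat Z$ is normal parallel along $\widehat\beta$ if and only if $z^\perp(t)=R(t)^\top\widehat Z(t)\theta(t)\in N_X\mathrm{St}(n,k)$ satisfies $$\dot z^\perp(t)=-\big(P_X^\perp\circ f_{(\xi_1(t),\xi_2(t))}\big)(z^\perp(t)),\quad t\in I,$$ where $(\xi_1(t),\xi_2(t))=(R(t)^\top\dot R(t),\theta(t)^\top\dot\theta(t))$.
   Context: $\mathrm{St}(n,k)=\{Y\in\mathbb{R}^{n\times k}:Y^\top Y=I_k\}$ with metric $2\operatorname{tr}(V^\top W)$; $T_Y\mathrm{St}(n,k)=\{V:Y^\top V+V^\top Y=0\}$, $N_Y\mathrm{St}(n,k)$ its Frobenius-orthogonal complement, $P_Y^\perp(V)=\tfrac12Y(Y^\top V+V^\top Y)$ the orthogonal projection onto $N_Y\mathrm{St}(n,k)$. A normal field $\widehat Z$ along $\widehat\beta$ is normal parallel if $P^\perp_{\widehat\beta(t)}\big(\tfrac{d}{dt}\widehat Z(t)\big)=0$ for all $t$. $f_{(\xi_1,\xi_2)}(V)=\xi_1V-V\xi_2$. Horizontal lift: $R(t)X\theta(t)^\top=\widehat\beta(t)$ and $(R^\top\dot R,\theta^\top\dot\theta)\in\mathfrak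 p$, where $\mathfrak p$ is the orthogonal complement in $\mathfrak{so}(n)\times\mathfrak{so}(k)$ of $\mathfrak h=\{(\Omega,\eta):\Omega X=X\eta\}$ with respect to $\langle(\Omega_1,\Psi_1),(\Omega_2,\Psi_2)\rangle=-\operatorname{tr}(\Omega_1\Omega_2)+2\operatorname{tr}(\Psi_1\Psi_2)$. *)

(* Defs.v *)
From HB Require Import structures.
From mathcomp Require Import all_boot all_order all_algebra.
From mathcomp Require Import all_classical all_reals all_analysis.
Set Implicit Arguments. Unset Strict Implicit. Unset Printing Implicit Defensive.
Import Order.TTheory GRing.Theory Num.Theory.
Local Open Scope ring_scope.

Section StiefelDefs.
Variable R : realType.

Definition mx_derivable m n (A : R -> 'M[R]_(m, n)) (t : R) : Prop :=
  forall i j, derivable (fun s => A s i j) t 1.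

Definition mx_deriv m n (A : R -> 'M[R]_(m, n)) (t : R) : 'M[R]_(m, n) :=
  \matrix_(i, j) (derive1 (fun s => A s i j) t).

Definition stiefel n k (Y : 'M[R]_(n, k)) : Prop := Y^T *m Y = 1%:M.

Definition orthogonal n (Q : 'M[R]_n) : Prop := Q^T *m Q = 1%:M.

Definition skew n (A : 'M[R]_n) : Prop := A^T = - A.

Definition tangent n k (Y V : 'M[R]_(n, k)) : Prop :=
  Y^T *m V + V^T *m Y = 0.

Definition normal n k (Y V : 'M[R]_(n, k)) : Prop :=
  forall W, tangent Y W -> \tr (V^T *m W) = 0.

(* orthogonal projection onto the normal space *)
Definition Pperp n k (Y V : 'M[R]_(n, k)) : 'M[R]_(n, k) :=
  (2%:R)^-1 *: (Y *m (Y^T *m V + V^T *m Y)).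

Definition fxi n k (xi1 : 'M[R]_n) (xi2 : 'M[R]_k) (V : 'M[R]_(n, k)) :=
  xi1 *m V - V *m xi2.

Definition in_h n k (X : 'M[R]_(n, k)) (Om : 'M[R]_n) (eta : 'M[R]_k) :=
  skew Om /\ skew eta /\ Om *m X = X *m eta.

Definition in_p n k (X : 'M[R]_(n, k)) (Om : 'M[R]_n) (Psi : 'M[R]_k) :=
  skew Om /\ skew Psi /\
  forall Om' eta, in_h X Om' eta ->
    - \tr (Om *m Om') + 2%:R * \tr (Psi *m eta) = 0.

Definition horizontal_lift n k (I : set R) (X : 'M[R]_(n, k))
  (beta : R -> 'M[R]_(n, k)) (Q : R -> 'M[R]_n) (th : R -> 'M[R]_k) :=
  forall t, I t ->
    [/\ orthogonal (Q t) /\ orthogonal (th t),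
        mx_derivable Q t, mx_derivable th t,
        Q t *m X *m (th t)^T = beta t &
        in_p X ((Q t)^T *m mx_deriv Q t) ((th t)^T *m mx_deriv th t)].

Definition normal_parallel n k (I : set R) (beta Z : R -> 'M[R]_(n, k)) :=
  forall t, I t -> Pperp (beta t) (mx_deriv Z t) = 0.

End StiefelDefs.

(* Main.v *)
Require Import Defs.
From HB Require Import structures.
From mathcomp Require Import all_boot all_order all_algebra.
From mathcomp Require Import all_classical all_reals all_analysis.
Import Order.TTheory GRing.Theory Num.Theory.
Local Open Scope ring_scope.
Import numFieldNormedType.Exports.
Local Open Scope classical_set_scope.

Section H.
Set Implicit Arguments.
Variable R : realType.
Implicit Types (t : R).

Lemma dsum N (h : 'I_N -> R -> R) t :
  (forall l, derivable (h l) t 1) ->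
  derivable (fun s => \sum_l h l s) t 1 /\
  'D_1 (fun s => \sum_l h l s) t = \sum_l 'D_1 (h l) t.
Proof.
move=> dh; have -> : (fun s => \sum_l h l s) = \sum_l h l by rewrite fct_sumE.
split; [exact: derivable_sum | exact: derive_sum].
Qed.

Lemma dmul (f g : R -> R) t : derivable f t 1 -> derivable g t 1 ->
  derivable (fun s => f s * g s) t 1 /\
  'D_1 (fun s => f s * g s) t = 'D_1 f t * g t + f t * 'D_1 g t.
Proof.
move=> df dg; have -> : (fun s => f s * g s) = (f * g)%R by [].
split; first exact: derivableM.
by rewrite deriveM // addrC mulrC.
Qed.

Lemma dadd (f g : R -> R) t : derivable f t 1 -> derivable g t 1 ->
  derivable (fun s => f s + g s) t 1 /\
  'D_1 (fun s => f s + g s) t = 'D_1 f t + 'D_1 g t.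
Proof.
move=> df dg; have -> : (fun s => f s + g s) = (f + g)%R by [].
split; first exact: derivableD.
by rewrite deriveD.
Qed.

Lemma dscale (f : R -> R) c t : derivable f t 1 ->
  derivable (fun s => c * f s) t 1 /\
  'D_1 (fun s => c * f s) t = c * 'D_1 f t.
Proof.
move=> df; have -> : (fun s => c * f s) = (c \*: f)%R by [].
split; first exact: derivableZ.
by rewrite deriveZ.
Qed.

Lemma dopp (f : R -> R) t : derivable f t 1 ->
  derivable (fun s => - f s) t 1 /\
  'D_1 (fun s => - f s) t = - 'D_1 f t.
Proof.
move=> df; have -> : (fun s => - f s) = (- f)%R by [].
split; first exact: derivableN.
by rewrite deriveN.
Qed.

Lemma mxdE m n (A : R -> 'M[R]_(m, n)) t i j :
  mx_deriv A t i j = 'D_1 (fun s => A s i j) t.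
Proof. by rewrite mxE derive1E. Qed.

Lemma mxdM m n p (A : R -> 'M[R]_(m, n)) (B : R -> 'M[R]_(n, p)) t :
  mx_derivable A t -> mx_derivable B t ->
  mx_derivable (fun s => A s *m B s) t /\
  mx_deriv (fun s => A s *m B s) t = mx_deriv A t *m B t + A t *m mx_deriv B t.
Proof.
move=> dA dB.
have E i j : (fun s => (A s *m B s) i j) = (fun s => \sum_l A s i l * B s l j).
  by apply/funext=> s; rewrite mxE.
split.
  move=> i j; rewrite E; apply: (@dsum _ (fun l s => A s i l * B s l j) t _).1 => l; exact: (dmul (dA i l) (dB l j)).1.
apply/matrixP=> i j; rewrite mxdE E (@dsum _ (fun l s => A s i l * B s l j) t _).2; last first.
  by move=> l; exact: (dmul (dA i l) (dB l j)).1.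
rewrite !mxE -big_split /=; apply: eq_bigr => l _.
by rewrite (dmul (dA i l) (dB l j)).2 !mxdE.
Qed.

Lemma mxdT m n (A : R -> 'M[R]_(m, n)) t :
  mx_derivable A t ->
  mx_derivable (fun s => (A s)^T) t /\
  mx_deriv (fun s => (A s)^T) t = (mx_deriv A t)^T.
Proof.
move=> dA.
have E i j : (fun s => ((A s)^T) i j) = (fun s => A s j i).
  by apply/funext=> s; rewrite mxE.
split; first by move=> i j; rewrite E.
by apply/matrixP=> i j; rewrite mxdE E mxE mxdE.
Qed.

Lemma mxdD m n (A B : R -> 'M[R]_(m, n)) t :
  mx_derivable A t -> mx_derivable B t ->
  mx_derivable (fun s => A s + B s) t /\
  mx_deriv (fun s => A s + B s) t = mx_deriv A t + mx_deriv B t.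
Proof.
move=> dA dB.
have E i j : (fun s => (A s + B s) i j) = (fun s => A s i j + B s i j).
  by apply/funext=> s; rewrite mxE.
split; first by move=> i j; rewrite E; exact: (dadd (dA i j) (dB i j)).1.
by apply/matrixP=> i j; rewrite mxdE E (dadd (dA i j) (dB i j)).2 mxE !mxdE.
Qed.

Lemma mxdZ m n (A : R -> 'M[R]_(m, n)) c t :
  mx_derivable A t ->
  mx_derivable (fun s => c *: A s) t /\
  mx_deriv (fun s => c *: A s) t = c *: mx_deriv A t.
Proof.
move=> dA.
have E i j : (fun s => (c *: A s) i j) = (fun s => c * A s i j).
  by apply/funext=> s; rewrite mxE.
split; first by move=> i j; rewrite E; exact: (dscale c (dA i j)).1.
by apply/matrixP=> i j; rewrite mxdE E (dscale c (dA i j)).2 mxE !mxdE.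
Qed.

Lemma mxdN m n (A : R -> 'M[R]_(m, n)) t :
  mx_derivable A t ->
  mx_derivable (fun s => - A s) t /\
  mx_deriv (fun s => - A s) t = - mx_deriv A t.
Proof.
move=> dA.
have E i j : (fun s => (- A s) i j) = (fun s => - A s i j).
  by apply/funext=> s; rewrite mxE.
split; first by move=> i j; rewrite E; exact: (dopp (dA i j)).1.
by apply/matrixP=> i j; rewrite mxdE E (dopp (dA i j)).2 mxE !mxdE.
Qed.

Lemma mxdC m n (C : 'M[R]_(m, n)) t :
  mx_derivable (fun _ => C) t /\ mx_deriv (fun _ => C) t = 0.
Proof.
split; first by move=> i j; exact: derivable_cst.
apply/matrixP=> i j; rewrite mxdE mxE.
by have -> : (fun _ : R => C i j) = cst (C i j) by []; rewrite derive_cst.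
Qed.

Lemma mxd_near m n (A B : R -> 'M[R]_(m, n)) t :
  (\forall s \near t, A s = B s) -> mx_deriv A t = mx_deriv B t.
Proof.
move=> AB; apply/matrixP=> i j; rewrite !mxdE; apply: near_eq_derive.
by near=> s; rewrite (near AB s).
Unshelve. all: by end_near. Qed.

End H.

Section A.
Set Implicit Arguments.
Variable R : realType.

Lemma half_half : (2%:R : R)^-1 + 2%:R^-1 = 1.
Proof. by rewrite [RHS](splitr 1) !mul1r. Qed.

Lemma trD m n (A B : 'M[R]_(m, n)) : (A + B)^T = A^T + B^T.
Proof. by apply/matrixP=> i j; rewrite !mxE. Qed.
Lemma trN m n (A : 'M[R]_(m, n)) : (- A)^T = - A^T.
Proof. by apply/matrixP=> i j; rewrite !mxE. Qed.
Lemma trB m n (A B : 'M[R]_(m, n)) : (A - B)^T = A^T - B^T.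
Proof. by rewrite trD trN. Qed.
Lemma trZ m n c (A : 'M[R]_(m, n)) : (c *: A)^T = c *: A^T.
Proof. by apply/matrixP=> i j; rewrite !mxE. Qed.

Lemma mtrN m (A : 'M[R]_m) : \tr (- A) = - \tr A.
Proof. by rewrite /mxtrace -sumrN; apply: eq_bigr => i _; rewrite mxE. Qed.
Lemma mtrB m (A B : 'M[R]_m) : \tr (A - B) = \tr A - \tr B.
Proof. by rewrite mxtraceD mtrN. Qed.

Lemma PperpD n k (Y A B : 'M[R]_(n, k)) :
  Pperp Y (A + B) = Pperp Y A + Pperp Y B.
Proof.
rewrite /Pperp -scalerDr; congr (_ *: _); rewrite -mulmxDr; congr (_ *m _).
by rewrite mulmxDr linearD /= mulmxDl addrACA.
Qed.

Lemma PperpN n k (Y A : 'M[R]_(n, k)) : Pperp Y (- A) = - Pperp Y A.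
Proof.
by rewrite /Pperp mulmxN linearN /= mulNmx -opprD mulmxN scalerN.
Qed.

Lemma trace_sq0 n k (W : 'M[R]_(n, k)) : \tr (W^T *m W) = 0 -> W = 0.
Proof.
move=> H; apply/matrixP => i j; rewrite mxE.
have E : \tr (W^T *m W) = \sum_j0 \sum_i0 W i0 j0 ^+ 2.
  rewrite /mxtrace; apply: eq_bigr => l _; rewrite mxE.
  by apply: eq_bigr => m _; rewrite mxE expr2.
move: H; rewrite E => H.
have Hj := psumr_eq0P (fun j0 _ => sumr_ge0 _ (fun i0 _ => sqr_ge0 (W i0 j0))) H.
have := Hj j isT.
move=> Hi; have := psumr_eq0P (fun i0 _ => sqr_ge0 (W i0 j)) Hi (i:=i) isT.
by move/eqP; rewrite sqrf_eq0 => /eqP.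
Qed.

Lemma normal_fix n k (X V : 'M[R]_(n, k)) :
  stiefel X -> normal X V -> Pperp X V = V.
Proof.
rewrite /stiefel => HX HN.
set h := (2%:R : R)^-1.
set S := X^T *m V + V^T *m X.
have St : S^T = S by rewrite /S linearD /= !trmx_mul !trmxK addrC.
set W := V - Pperp X V.
have XW : X^T *m W = X^T *m V - h *: S.
  by rewrite /W /Pperp mulmxBr -scalemxAr mulmxA HX mul1mx.
have WX : W^T *m X = (X^T *m W)^T by rewrite trmx_mul trmxK.
have tW : tangent X W.
  rewrite /tangent WX XW trB trZ St trmx_mul trmxK.
  rewrite addrACA -/S -opprD -scalerDl half_half scale1r subrr //.
have t1 : \tr (V^T *m W) = 0 := HN W tW.
have Ksk : (X^T *m W)^T = - (X^T *m W).
  by apply/eqP; rewrite -addr_eq0 addrC -WX; apply/eqP; exact: tW.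
have t2 : \tr ((Pperp X V)^T *m W) = 0.
  rewrite /Pperp trZ trmx_mul -/S St -scalemxAl -mulmxA mxtraceZ.
  set K := X^T *m W.
  suff -> : \tr (S *m K) = 0 by rewrite mulr0.
  have e : \tr (S *m K) = - \tr (S *m K).
    rewrite -[in LHS]mxtrace_tr trmx_mul Ksk St mulNmx.
    by rewrite mtrN mxtrace_mulC.
  have : \tr (S *m K) *+ 2 == 0 by rewrite mulr2n {1}e addNr.
  by rewrite mulrn_eq0 orFb => /eqP.
have : \tr (W^T *m W) = 0.
  rewrite {1}/W trB mulmxBl mtrB t1 t2 subrr //.
move/trace_sq0 => W0; apply/eqP; rewrite eq_sym -subr_eq0; apply/eqP; exact W0.
Qed.


Lemma normal_equiv n k (X : 'M[R]_(n, k)) (Q : 'M[R]_n) (th : 'M[R]_k) Zt :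
  Q^T *m Q = 1%:M -> th^T *m th = 1%:M ->
  normal (Q *m X *m th^T) Zt -> normal X (Q^T *m Zt *m th).
Proof.
move=> HQ Ht HN W tW.
have tW' : tangent (Q *m X *m th^T) (Q *m W *m th^T).
  rewrite /tangent !trmx_mul !trmxK !mulmxA -!(mulmxA _ Q^T Q) HQ !mulmx1.
  have -> : th *m X^T *m W *m th^T + th *m W^T *m X *m th^T =
            th *m (X^T *m W + W^T *m X) *m th^T.
    by rewrite mulmxDr mulmxDl !mulmxA.
  by rewrite tW mulmx0 mul0mx.
have := HN _ tW'.
rewrite !trmx_mul !trmxK !mulmxA => H.
by rewrite -!mulmxA mxtrace_mulC !mulmxA.
Qed.

Lemma Pperp_equiv n k (X : 'M[R]_(n, k)) (Q : 'M[R]_n) (th : 'M[R]_k) W :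
  Q^T *m Q = 1%:M -> th^T *m th = 1%:M ->
  Pperp X (Q^T *m W *m th) = Q^T *m Pperp (Q *m X *m th^T) W *m th.
Proof.
move=> HQ Ht.
rewrite /Pperp -scalemxAr -scalemxAl; congr (_ *: _).
rewrite !trmx_mul !trmxK !mulmxDr !mulmxDl !mulmxA HQ !mul1mx.
by rewrite -!(mulmxA _ th^T th) Ht !mulmx1.
Qed.

End A.

Theorem lemma5p9 (R : realType) (n k : nat) (a b : R) (X : 'M[R]_(n, k))
  (beta Z : R -> 'M[R]_(n, k)) (Q : R -> 'M[R]_n) (th : R -> 'M[R]_k) :
  (a < b)%R ->
  stiefel X ->
  (forall t, `]a, b[%classic t ->
     [/\ stiefel (beta t), mx_derivable beta t,
         mx_derivable Z t & normal (beta t) (Z t)]) ->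
  horizontal_lift `]a, b[%classic X beta Q th ->
  normal_parallel `]a, b[%classic beta Z <->
  (forall t, `]a, b[%classic t ->
     mx_deriv (fun s => (Q s)^T *m Z s *m th s) t =
     - Pperp X (fxi ((Q t)^T *m mx_deriv Q t) ((th t)^T *m mx_deriv th t)
                    ((Q t)^T *m Z t *m th t))).
Proof.
move=> ab HX Hb Hl.
set z := fun s => (Q s)^T *m Z s *m th s.
have main : forall t, `]a, b[%classic t ->
   mx_deriv z t = - fxi ((Q t)^T *m mx_deriv Q t) ((th t)^T *m mx_deriv th t) (z t)
                  + (Q t)^T *m mx_deriv Z t *m th t
   /\ Pperp X (mx_deriv z t) = mx_deriv z t.
  move=> t It.
  have [_ dbeta dZ nZ] := Hb t It.
  have [[oQ oth] dQ dth eb _] := Hl t It.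
  have QQt := mulmx1C oQ.
  have tht := mulmx1C oth.
  have nI : \forall s \near t, `]a, b[%classic s := near_in_itvoo It.
  have [dQT eQT] := mxdT dQ.
  have [dQZ eQZ] := mxdM dQT dZ.
  have [dz ez] := mxdM dQZ dth.
  have ez' : mx_deriv z t = ((mx_deriv Q t)^T *m Z t + (Q t)^T *m mx_deriv Z t) *m th t
                            + (Q t)^T *m Z t *m mx_deriv th t.
    by rewrite /z ez eQZ eQT.
  have eQQ : mx_deriv (fun s => (Q s)^T *m Q s) t = 0.
    rewrite (@mxd_near _ _ _ _ (fun _ => (1%:M : 'M[R]_n))); first exact: (mxdC _ (1%:M : 'M[R]_n) t).2.
    apply: filterS nI => s Is; by have [[? _] _ _ _ _] := Hl s Is.
  have [_ eQQ'] := mxdM dQT dQ.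
  have dQT1 : (mx_deriv Q t)^T = - ((Q t)^T *m mx_deriv Q t) *m (Q t)^T.
    move: eQQ; rewrite eQQ' eQT => /eqP; rewrite addr_eq0 => /eqP H.
    by rewrite -[LHS]mulmx1 -QQt mulmxA H.
  split.
    rewrite ez' dQT1 /fxi.
    have -> : z t *m ((th t)^T *m mx_deriv th t) = (Q t)^T *m Z t *m mx_deriv th t.
      by rewrite /z !mulmxA -(mulmxA _ (th t) (th t)^T) tht mulmx1.
    rewrite mulmxDl mulNmx !mulmxA /z opprB.
    by rewrite !mulNmx addrAC (addrC (- _)).
  have nz : \forall s \near t, z s = Pperp X (z s).
    apply: filterS nI => s Is.
    have [_ _ _ nZs] := Hb s Is.
    have [[oQs oths] _ _ ebs _] := Hl s Is.
    rewrite normal_fix //; apply: normal_equiv => //; by rewrite ebs.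
  have [d1 e1] := mxdM (mxdC _ X^T t).1 dz.
  have [dzT ezT] := mxdT dz.
  have [d2 e2] := mxdM dzT (mxdC _ X t).1.
  have [d3 e3] := mxdD d1 d2.
  have [d4 e4] := mxdM (mxdC _ X t).1 d3.
  have [d5 e5] := mxdZ (2%:R^-1) d4.
  have Ed : mx_deriv z t = Pperp X (mx_deriv z t).
    transitivity (mx_deriv (fun s => Pperp X (z s)) t); first by apply: mxd_near.
    have -> : mx_deriv (fun s => Pperp X (z s)) t = _ := e5.
    rewrite e4 e3 e2 e1 ezT !(mxdC _ _ t).2 !mul0mx !mulmx0 !add0r !addr0.
    by [].
  by rewrite -Ed.
have PE : forall t, `]a, b[%classic t ->
  Pperp X (mx_deriv z t) =
  - Pperp X (fxi ((Q t)^T *m mx_deriv Q t) ((th t)^T *m mx_deriv th t) (z t))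
  + (Q t)^T *m Pperp (beta t) (mx_deriv Z t) *m th t.
  move=> t It; have [E1 _] := main t It.
  have [[oQ oth] _ _ eb _] := Hl t It.
  by rewrite E1 PperpD PperpN Pperp_equiv // eb.
split.
  move=> NP t It; have [_ E2] := main t It.
  by rewrite -E2 PE // NP // mulmx0 mul0mx addr0.
move=> H t It; have [_ E2] := main t It.
have [[oQ oth] _ _ eb _] := Hl t It.
have QQt := mulmx1C oQ.
have tht := mulmx1C oth.
have K0 : (Q t)^T *m Pperp (beta t) (mx_deriv Z t) *m th t = 0.
  apply: (@addrI _ (- Pperp X (fxi ((Q t)^T *m mx_deriv Q t)
                    ((th t)^T *m mx_deriv th t) (z t)))).
  by rewrite addr0 -PE // E2 H.
set P := Pperp (beta t) (mx_deriv Z t) in K0 *.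
have -> : P = Q t *m ((Q t)^T *m P *m th t) *m (th t)^T.
  by rewrite !mulmxA QQt mul1mx -mulmxA tht mulmx1.
by rewrite K0 mulmx0 mul0mx.
Qed.
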